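(* Let $C>0$, $a>1$, $m>0$ and $m'<ma$. Let $Y:\mathbb{R}_+\to\mathbb{R}_+$ be a $\mathcal{C}^1$ function satisfying $$\frac{d}{dt}Y+\frac{a}{1+t}Y\leq C\left(\frac{Y}{(1+t)^2}+Y^2+(1+t)^{m'-1}Y^{m+1}\right)\quad\text{on }\mathbb{R}_+.$$ Then there exists $c=c(a,m,m',C)>0$ such that if $Y(0)\leq c$, then $$Y(t)\leq 2e^{\frac{Ct}{1+t}}\frac{Y(0)}{(1+t)^a}\quad\text{for all }t\geq0.$$ *)

(* Defs.v *)
From Stdlib Require Import Reals Lra.
Open Scope R_scope.

(* Real power x^b for x >= 0, with the convention 0^b = 0 (b > 0).
   Stdlib's Rpower 0 b = exp (b * ln 0) = 1, which is wrong at 0. *)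
Definition rpow (x b : R) : R := if Rlt_dec 0 x then Rpower x b else 0.

Definition C1_Rplus (Y Y' : R -> R) : Prop :=
  (forall t, 0 <= t -> forall eps, 0 < eps -> exists delta, 0 < delta /\
     forall h, h <> 0 -> 0 <= t + h -> Rabs h < delta ->
       Rabs ((Y (t + h) - Y t) / h - Y' t) < eps) /\
  (forall t, 0 <= t -> forall eps, 0 < eps -> exists delta, 0 < delta /\
     forall s, 0 <= s -> Rabs (s - t) < delta -> Rabs (Y' s - Y' t) < eps).

(* Main.v *)
Require Import Defs.
From Stdlib Require Import Reals Lra.
From Coquelicot Require Import Coquelicot.
Open Scope R_scope.

Definition Gf (a m m' A B t : R) :=
  A / (a - 1) * (1 - exp ((1 - a) * ln (1 + t))) +
  B / (m * a - m') * (1 - exp ((m' - m * a) * ln (1 + t))).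
Definition gf (a m m' A B t : R) :=
  A * exp ((1 - a) * ln (1 + t)) / (1 + t) +
  B * exp ((m' - m * a) * ln (1 + t)) / (1 + t).
Definition Hf (C a m m' A B t : R) :=
  exp (a * ln (1 + t) - C * t / (1 + t) - Gf a m m' A B t).
Definition kf (C a m m' A B t : R) :=
  a / (1 + t) - C / (1 + t) ^ 2 - gf a m m' A B t.

Lemma H_deriv C a m m' A B t : 1 < a -> m' < m * a -> 0 <= t ->
  derivable_pt_lim (Hf C a m m' A B) t (Hf C a m m' A B t * kf C a m m' A B t).
Proof.
intros ha hm ht. apply is_derive_Reals. unfold Hf, Gf, kf, gf.
auto_derive.
- repeat split; lra.
- match goal with |- _ * exp ?x = exp ?y * _ => replace x with y by (field; lra) end.
  field. lra.
Qed.

Lemma E_deriv a t : 0 <= t -> derivable_pt (fun s => exp (a * ln (1 + s))) t.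
Proof.
intros ht. eexists. apply is_derive_Reals. auto_derive; [lra|reflexivity].
Qed.

Lemma exp_le x y : x <= y -> exp x <= exp y.
Proof. intros [h|h]; [left; apply exp_increasing; exact h| subst; lra]. Qed.
Definition Yext (Y Y' : R -> R) t := if Rle_dec 0 t then Y t else Y 0 + t * Y' 0.

Lemma Yext_eq Y Y' t : 0 <= t -> Yext Y Y' t = Y t.
Proof. intros; unfold Yext; destruct (Rle_dec 0 t); [reflexivity|lra]. Qed.

Lemma Yext_deriv Y Y' t : C1_Rplus Y Y' -> 0 <= t ->
  derivable_pt_lim (Yext Y Y') t (Y' t).
Proof.
intros [HD _] ht eps heps.
destruct (HD t ht eps heps) as [d [hd Hd]].
destruct (Req_dec t 0) as [Ht0|Ht0].
- subst t. exists (mkposreal d hd). intros h hh hlt. simpl in hlt.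
  rewrite (Yext_eq _ _ 0) by lra.
  destruct (Rle_dec 0 h) as [hp|hn].
  + rewrite Yext_eq by lra. replace (0+h) with h by ring.
    specialize (Hd h hh ltac:(lra) hlt). replace (0+h) with h in Hd by ring. exact Hd.
  + unfold Yext. destruct (Rle_dec 0 (0+h)); [lra|].
    replace ((Y 0 + (0 + h) * Y' 0 - Y 0) / h - Y' 0) with 0 by (field; exact hh).
    rewrite Rabs_R0; exact heps.
- assert (0 < Rmin d t) by (apply Rmin_pos; lra).
  exists (mkposreal _ H). intros h hh hlt. simpl in hlt.
  assert (Rabs h < d) by (eapply Rlt_le_trans; [exact hlt|apply Rmin_l]).
  assert (Rabs h < t) by (eapply Rlt_le_trans; [exact hlt|apply Rmin_r]).
  assert (0 <= t + h) by (apply Rabs_def2 in H1; lra).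
  rewrite !Yext_eq by lra. apply Hd; assumption.
Qed.
Lemma cont_eps f x eps : continuity_pt f x -> 0 < eps ->
  exists d, 0 < d /\ forall y, Rabs (y - x) < d -> Rabs (f y - f x) < eps.
Proof.
intros Hc he. destruct (Hc eps he) as [d [hd Hd]].
exists d; split; [exact hd|]. intros y hy.
destruct (Req_dec y x) as [->|hne].
- unfold Rminus; rewrite Rplus_opp_r, Rabs_R0; exact he.
- apply (Hd y). split; [split; [exact I| auto] | exact hy].
Qed.

Lemma cont_ind (P : R -> R) (M T : R) :
  (forall t, 0 <= t -> continuity_pt P t) -> P 0 <= M ->
  (forall t, 0 <= t -> (forall s, 0 <= s <= t -> P s <= M) -> P t < M) ->
  0 <= T -> forall s, 0 <= s <= T -> P s <= M.
Proof.
intros Hc H0 Hstep hT.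
set (E := fun x => 0 <= x <= T /\ forall s, 0 <= s <= x -> P s <= M).
assert (hb : bound E) by (exists T; intros x [hx _]; lra).
assert (he : exists x, E x).
{ exists 0. split; [lra|]. intros s hs. replace s with 0 by lra. exact H0. }
destruct (completeness E hb he) as [ts [hub hlub]].
assert (h0 : 0 <= ts) by (apply hub; split; [lra| intros s hs; replace s with 0 by lra; exact H0]).
assert (hT' : ts <= T) by (apply hlub; intros x [hx _]; lra).
assert (Hlt : forall s, 0 <= s < ts -> P s <= M).
{ intros s hs. destruct (Rle_lt_dec ts s) as [h|h]; [lra|].
  assert (~ is_upper_bound E s) as Hn.
  { intro Hu. specialize (hlub s Hu). lra. }
  apply Classical_Pred_Type.not_all_ex_not in Hn. destruct Hn as [x Hx].
  apply Classical_Prop.imply_to_and in Hx. destruct Hx as [[hx1 hx2] hx3].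
  apply hx2; lra. }
assert (Hts : P ts <= M).
{ destruct (Rle_lt_dec (P ts) M) as [h|h]; [exact h|].
  destruct (Req_dec ts 0) as [e|e]; [subst; lra|].
  destruct (cont_eps P ts (P ts - M) (Hc ts h0) ltac:(lra)) as [d [hd Hd]].
  set (s := Rmax 0 (ts - d/2)).
  assert (hs1 : 0 <= s) by apply Rmax_l.
  assert (hs2 : s < ts) by (unfold s; apply Rmax_lub_lt; lra).
  assert (hs3 : ts - d/2 <= s) by apply Rmax_r.
  specialize (Hlt s ltac:(lra)).
  assert (Rabs (s - ts) < d) by (rewrite Rabs_left by lra; lra).
  specialize (Hd s H). apply Rabs_def2 in Hd. lra. }
assert (Hall : forall s, 0 <= s <= ts -> P s <= M).
{ intros s hs. destruct (Req_dec s ts) as [->|hne]; [exact Hts|apply Hlt; lra]. }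
assert (Hst : P ts < M) by (apply Hstep; auto).
assert (hTe : ts = T).
{ destruct (Req_dec ts T) as [e|e]; [exact e|].
  destruct (cont_eps P ts (M - P ts) (Hc ts h0) ltac:(lra)) as [d [hd Hd]].
  set (x := Rmin T (ts + d/2)).
  assert (hx1 : ts < x) by (unfold x; apply Rmin_glb_lt; lra).
  assert (hx2 : x <= T) by apply Rmin_l.
  assert (hx3 : x <= ts + d/2) by apply Rmin_r.
  assert (E x).
  { split; [lra|]. intros s hs.
    destruct (Rle_lt_dec s ts) as [h|h]; [apply Hall; lra|].
    assert (Rabs (s - ts) < d) by (rewrite Rabs_right by lra; lra).
    specialize (Hd s H). apply Rabs_def2 in Hd. lra. }
  specialize (hub x H). lra. }
subst ts. exact Hall.
Qed.
Lemma pt_ineq C a m m' M y u : 0 < C -> 1 < a -> 0 < m -> 0 < M -> 0 <= u -> 0 <= y ->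
  y * exp (a * ln (1 + u)) <= M ->
  C * y ^ 2 + C * Rpower (1 + u) (m' - 1) * rpow y (m + 1) <=
  gf a m m' (C * M) (C * Rpower M m) u * y.
Proof.
intros hC ha hm hM hu hy hP. unfold gf.
set (L := ln (1 + u)). fold L in hP.
assert (hx : 1 + u = exp L) by (unfold L; rewrite exp_ln; lra).
assert (hE : 0 < exp (a * L)) by apply exp_pos.
assert (e1 : exp ((1 - a) * L) / (1 + u) = / exp (a * L)).
{ rewrite hx. replace ((1 - a) * L) with (L + - (a * L)) by ring.
  rewrite exp_plus, exp_Ropp. field. split; apply Rgt_not_eq, exp_pos. }
assert (P1 : C * y ^ 2 <= C * M * exp ((1 - a) * L) / (1 + u) * y).
{ replace (C * M * exp ((1 - a) * L) / (1 + u) * y) with (C * M * (exp ((1 - a) * L) / (1 + u)) * y) by (unfold Rdiv; ring).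
  rewrite e1.
  apply Rle_trans with (C * (y * exp (a * L)) * / exp (a * L) * y).
  - right. field. lra.
  - apply Rmult_le_compat_r; [lra|]. apply Rmult_le_compat_r.
    + left; apply Rinv_0_lt_compat; exact hE.
    + apply Rmult_le_compat_l; lra. }
assert (P2 : C * Rpower (1 + u) (m' - 1) * rpow y (m + 1) <=
             C * Rpower M m * exp ((m' - m * a) * L) / (1 + u) * y).
{ unfold rpow. destruct (Rlt_dec 0 y) as [hy0|hy0].
  - unfold Rpower. fold L.
    assert (hl : ln y + a * L <= ln M).
    { rewrite <- (ln_exp (a * L)), <- ln_mult by (try exact hy0; exact hE).
      destruct (Req_dec (y * exp (a * L)) M) as [e|e]; [rewrite e; lra|].
      left; apply ln_increasing; [apply Rmult_lt_0_compat; assumption| lra]. }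
    apply Rle_trans with (C * exp ((m' - 1) * L + (m + 1) * ln y)).
    + right. rewrite exp_plus. ring.
    + apply Rle_trans with (C * exp (m * ln M + (m' - m * a) * L - L + ln y)).
      * apply Rmult_le_compat_l; [lra|]. 
        destruct (Req_dec ((m' - 1) * L + (m + 1) * ln y) (m * ln M + (m' - m * a) * L - L + ln y)) as [e|e];
        [rewrite e; lra|]. left; apply exp_increasing.
        assert (m * (ln y + a * L) <= m * ln M) by (apply Rmult_le_compat_l; lra). nra.
      * right. rewrite hx. unfold Rminus. rewrite !exp_plus, exp_Ropp, (exp_ln y hy0). field. apply Rgt_not_eq, exp_pos.
  - assert (y = 0) by lra. subst y. rewrite Rmult_0_r, Rmult_0_r. lra. }
lra.
Qed.

Theorem lemmaA1 (C a m m' : R) (hC : 0 < C) (ha : 1 < a) (hm : 0 < m)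
  (hm' : m' < m * a) :
  exists c : R, 0 < c /\
    forall Y Y' : R -> R,
      C1_Rplus Y Y' ->
      (forall t, 0 <= t -> 0 <= Y t) ->
      (forall t, 0 <= t ->
         Y' t + a / (1 + t) * Y t <=
         C * (Y t / (1 + t) ^ 2 + Y t ^ 2
              + Rpower (1 + t) (m' - 1) * rpow (Y t) (m + 1))) ->
      Y 0 <= c ->
      forall t, 0 <= t ->
        Y t <= 2 * exp (C * t / (1 + t)) * Y 0 / Rpower (1 + t) a.
Proof.
set (D := (m * a - m') / (4 * C)).
assert (hD : 0 < D) by (unfold D; apply Rdiv_lt_0_compat; lra).
assert (heC : 0 < exp C) by apply exp_pos.
assert (hRD : 0 < Rpower D (1 / m)) by (unfold Rpower; apply exp_pos).
set (c := Rmin ((a - 1) / (12 * C * exp C)) (Rpower D (1 / m) / (3 * exp C))).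
assert (hc : 0 < c).
{ apply Rmin_pos; apply Rdiv_lt_0_compat; try lra;
  repeat apply Rmult_lt_0_compat; lra. }
exists c. split; [exact hc|].
intros Y Y' HC1 Hpos Hineq HY0.
set (M := 3 * c * exp C).
assert (hM : 0 < M) by (unfold M; repeat apply Rmult_lt_0_compat; lra).
set (A := C * M). set (B := C * Rpower M m).
assert (hA : A / (a - 1) <= 1 / 4).
{ assert (h := Rmin_l ((a - 1) / (12 * C * exp C)) (Rpower D (1 / m) / (3 * exp C))).
  fold c in h.
  apply Rmult_le_compat_r with (r := 12 * C * exp C) in h;
    [|left; repeat apply Rmult_lt_0_compat; lra].
  replace ((a - 1) / (12 * C * exp C) * (12 * C * exp C)) with (a - 1) in h
    by (field; split; lra).
  replace (1 / 4) with ((a - 1) / 4 / (a - 1)) by (field; lra).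
  apply Rmult_le_compat_r; [left; apply Rinv_0_lt_compat; lra|].
  unfold A, M. lra. }
assert (hB : B / (m * a - m') <= 1 / 4).
{ assert (h := Rmin_r ((a - 1) / (12 * C * exp C)) (Rpower D (1 / m) / (3 * exp C))).
  fold c in h.
  apply Rmult_le_compat_r with (r := 3 * exp C) in h; [|lra].
  replace (Rpower D (1 / m) / (3 * exp C) * (3 * exp C)) with (Rpower D (1 / m)) in h
    by (field; lra).
  assert (hMm : Rpower M m <= D).
  { apply Rle_trans with (Rpower (Rpower D (1 / m)) m).
    - apply Rle_Rpower_l; [lra|]. split; [exact hM|]. unfold M. lra.
    - rewrite Rpower_mult. replace (1 / m * m) with 1 by (field; lra).
      rewrite Rpower_1 by exact hD. lra. }
  replace (1 / 4) with (C * D / (m * a - m')) by (unfold D; field; lra).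
  apply Rmult_le_compat_r; [left; apply Rinv_0_lt_compat; lra|].
  unfold B. apply Rmult_le_compat_l; lra. }
assert (hA0 : 0 <= A / (a - 1)) by (unfold A; apply Rle_mult_inv_pos; nra).
assert (hB0 : 0 <= B / (m * a - m')).
{ unfold B, Rpower. apply Rle_mult_inv_pos; [|lra].
  apply Rmult_le_pos; [lra| left; apply exp_pos]. }
assert (Gb : forall s, 0 <= s -> Gf a m m' A B s <= 1 / 2).
{ intros s hs. unfold Gf.
  assert (0 < exp ((1 - a) * ln (1 + s))) by apply exp_pos.
  assert (0 < exp ((m' - m * a) * ln (1 + s))) by apply exp_pos.
  assert (A / (a - 1) * (1 - exp ((1 - a) * ln (1 + s))) <= A / (a - 1)) by nra.
  assert (B / (m * a - m') * (1 - exp ((m' - m * a) * ln (1 + s))) <= B / (m * a - m')) by nra.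
  lra. }
assert (G0 : Gf a m m' A B 0 = 0).
{ unfold Gf. rewrite Rplus_0_r, ln_1, !Rmult_0_r, exp_0. ring. }
assert (e12 : exp (1 / 2) <= 2).
{ assert (h1 := exp_ineq1 (- (1/2)) ltac:(lra)).
  assert (h2 : exp (1 / 2) * exp (- (1 / 2)) = 1)
    by (rewrite <- exp_plus; replace (1 / 2 + - (1 / 2)) with 0 by ring; apply exp_0).
  assert (0 < exp (1/2)) by apply exp_pos. nra. }
set (H := Hf C a m m' A B). set (k := kf C a m m' A B).
set (W := fun u => Yext Y Y' u * H u).
set (W' := fun u => Y' u * H u + Yext Y Y' u * (H u * k u)).
set (P := fun u => Yext Y Y' u * exp (a * ln (1 + u))).
assert (Wd : forall u, 0 <= u -> derivable_pt_lim W u (W' u)).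
{ intros u hu. apply (derivable_pt_lim_mult (Yext Y Y') H).
  - apply Yext_deriv; assumption.
  - apply H_deriv; assumption. }
assert (W'neg : forall u, 0 <= u -> P u <= M -> W' u <= 0).
{ intros u hu hPu. unfold W'. rewrite Yext_eq by exact hu.
  unfold P in hPu. rewrite Yext_eq in hPu by exact hu.
  assert (hH : 0 < H u) by (unfold H, Hf; apply exp_pos).
  assert (hpt := pt_ineq C a m m' M (Y u) u hC ha hm hM hu (Hpos u hu) hPu).
  fold A B in hpt.
  assert (hi := Hineq u hu).
  assert (Y' u + k u * Y u <= 0).
  { unfold k, kf.
    replace (C * (Y u / (1 + u) ^ 2 + Y u ^ 2 + Rpower (1 + u) (m' - 1) * rpow (Y u) (m + 1)))
      with (C / (1 + u) ^ 2 * Y u + (C * Y u ^ 2 + C * Rpower (1 + u) (m' - 1) * rpow (Y u) (m + 1))) in hi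
      by (field; lra).
    lra. }
  replace (Y' u * H u + Y u * (H u * k u)) with (H u * (Y' u + k u * Y u)) by ring.
  nra. }
assert (bound : forall s, 0 <= s -> (forall u, 0 <= u <= s -> P u <= M) ->
          P s <= 2 * Y 0 * exp (C * s / (1 + s))).
{ intros s hs hall.
  assert (Wle : W s <= W 0).
  { destruct (Req_dec s 0) as [e|e]; [subst; lra|].
    destruct (MVT_cor2 W W' 0 s ltac:(lra) (fun u hu => Wd u (proj1 hu))) as [u [eq hu]].
    assert (W' u <= 0) by (apply W'neg; [lra| apply hall; lra]).
    nra. }
  assert (W0 : W 0 = Y 0).
  { unfold W, H, Hf. rewrite Yext_eq, G0 by lra.
    rewrite Rplus_0_r, ln_1. replace (a * 0 - C * 0 / 1 - 0) with 0 by field.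
    rewrite exp_0; ring. }
  assert (Ps : P s = W s * exp (C * s / (1 + s)) * exp (Gf a m m' A B s)).
  { unfold P, W, H, Hf. unfold Rminus. rewrite !exp_plus, !exp_Ropp.
    field. split; apply Rgt_not_eq, exp_pos. }
  assert (hG : exp (Gf a m m' A B s) <= 2) by (eapply Rle_trans; [apply exp_le, Gb, hs| exact e12]).
  assert (0 < exp (C * s / (1 + s))) by apply exp_pos.
  assert (0 < exp (Gf a m m' A B s)) by apply exp_pos.
  assert (0 <= Y 0) by (apply Hpos; lra).
  rewrite Ps, <- W0. 
  assert (W s * exp (Gf a m m' A B s) <= W 0 * 2).
  { destruct (Rle_lt_dec 0 (W s)); nra. }
  nra. }
assert (Pc : forall u, 0 <= u -> continuity_pt P u).
{ intros u hu. apply derivable_continuous_pt.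
  exists (Y' u * exp (a * ln (1 + u)) + Yext Y Y' u * proj1_sig (E_deriv a u hu)).
  apply (derivable_pt_lim_mult (Yext Y Y') (fun s => exp (a * ln (1 + s)))).
  - apply Yext_deriv; assumption.
  - exact (proj2_sig (E_deriv a u hu)). }
assert (P0 : P 0 <= M).
{ unfold P. rewrite Yext_eq by lra. rewrite Rplus_0_r, ln_1, Rmult_0_r, exp_0.
  unfold M. assert (c <= 3 * c * exp C).
  { assert (1 <= exp C) by (assert (h := exp_ineq1_le C); lra). nra. }
  lra. }
assert (Pstep : forall s, 0 <= s -> (forall u, 0 <= u <= s -> P u <= M) -> P s < M).
{ intros s hs hall. eapply Rle_lt_trans; [apply bound; assumption|].
  assert (exp (C * s / (1 + s)) <= exp C).
  { apply exp_le. apply Rmult_le_reg_r with (1 + s); [lra|].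
    unfold Rdiv. rewrite Rmult_assoc, Rinv_l by lra. nra. }
  assert (0 <= Y 0) by (apply Hpos; lra).
  unfold M. nra. }
intros t ht.
assert (Pt := bound t ht (cont_ind P M t Pc P0 Pstep ht)).
unfold P in Pt. rewrite Yext_eq in Pt by exact ht.
unfold Rpower.
assert (hE : 0 < exp (a * ln (1 + t))) by apply exp_pos.
apply (Rmult_le_reg_r (exp (a * ln (1 + t)))); [exact hE|].
replace (2 * exp (C * t / (1 + t)) * Y 0 / exp (a * ln (1 + t)) * exp (a * ln (1 + t)))
  with (2 * Y 0 * exp (C * t / (1 + t))) by (field; lra).
exact Pt.
Qed.
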